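(* A residuated lattice $L$ is a BL-algebra if and only if for all $x,y,z\in L$, $$[x\odot(x\rightarrow y)]\rightarrow z=(x\rightarrow z)\vee(y\rightarrow z).$$
   Context: A (commutative) residuated lattice is an algebra $(L,\wedge,\vee,\odot,\rightarrow,0,1)$ such that $(L,\wedge,\vee,0,1)$ is a bounded lattice, $(L,\odot,1)$ is a commutative ordered monoid, and $z\leq x\rightarrow y$ iff $x\odot z\leq y$ for all $x,y,z\in L$. A BL-algebra is a residuated lattice satisfying prelinearity $(x\rightarrow y)\vee(y\rightarrow x)=1$ and divisibility $x\odot(x\rightarrow y)=x\wedge y$ for all $x,y$. *)

(* Defs.v *)
From Stdlib Require Import Setoid.

(* A (commutative) residuated lattice (L, meet, join, mul, imp, 0, 1):
   - (L, meet, join, 0, 1) is a bounded lattice (given by the usual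
     equational axioms; the order is x <= y :<-> meet x y = x),
   - (L, mul, 1) is a commutative monoid, ordered (mul monotone),
   - residuation: z <= x -> y  iff  mul x z <= y. *)
Record ResLattice := {
  carrier :> Type;
  meet : carrier -> carrier -> carrier;
  join : carrier -> carrier -> carrier;
  mul  : carrier -> carrier -> carrier;
  imp  : carrier -> carrier -> carrier;
  bot  : carrier;
  top  : carrier;
  meetC : forall x y, meet x y = meet y x;
  joinC : forall x y, join x y = join y x;
  meetA : forall x y z, meet x (meet y z) = meet (meet x y) z;
  joinA : forall x y z, join x (join y z) = join (join x y) z;
  meet_absorb : forall x y, meet x (join x y) = x;
  join_absorb : forall x y, join x (meet x y) = x;
  meet_bot : forall x, meet bot x = bot;
  meet_top : forall x, meet top x = x;
  mulC : forall x y, mul x y = mul y x;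
  mulA : forall x y z, mul x (mul y z) = mul (mul x y) z;
  mul1 : forall x, mul x top = x;
  mul_mono : forall x y z, meet x y = x -> meet (mul x z) (mul y z) = mul x z;
  residuation : forall x y z,
      meet z (imp x y) = z <-> meet (mul x z) y = mul x z
}.

Arguments meet {r}. Arguments join {r}. Arguments mul {r}. Arguments imp {r}.
Arguments bot {r}. Arguments top {r}.

Definition rle {L : ResLattice} (x y : L) : Prop := meet x y = x.

Definition is_BL (L : ResLattice) : Prop :=
  (forall x y : L, join (imp x y) (imp y x) = top) /\
  (forall x y : L, mul x (imp x y) = meet x y).

(* Main.v *)
Require Import Defs.

Lemma meet_idem {L : ResLattice} (x : L) : meet x x = x.
Proof.
  rewrite <- (join_absorb L x x) at 2. apply meet_absorb.
Qed.

Lemma le_refl {L : ResLattice} (x : L) : rle x x.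
Proof. apply meet_idem. Qed.

Lemma le_trans {L : ResLattice} (x y z : L) : rle x y -> rle y z -> rle x z.
Proof.
  unfold rle; intros H1 H2. rewrite <- H1, <- meetA, H2. reflexivity.
Qed.

Lemma le_antisym {L : ResLattice} (x y : L) : rle x y -> rle y x -> x = y.
Proof.
  unfold rle; intros H1 H2. rewrite <- H1, meetC. exact H2.
Qed.

Lemma meet_l {L : ResLattice} (x y : L) : rle (meet x y) x.
Proof.
  unfold rle. rewrite (meetC _ x y), <- meetA, meet_idem. reflexivity.
Qed.

Lemma meet_r {L : ResLattice} (x y : L) : rle (meet x y) y.
Proof.
  unfold rle. rewrite <- meetA, meet_idem. reflexivity.
Qed.

Lemma meet_glb {L : ResLattice} (x y z : L) : rle z x -> rle z y -> rle z (meet x y).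
Proof.
  unfold rle; intros H1 H2. rewrite meetA, H1, H2. reflexivity.
Qed.

Lemma le_join {L : ResLattice} (x y : L) : rle x y <-> join x y = y.
Proof.
  unfold rle; split; intro H.
  - rewrite <- H, (joinC _ _ y), meetC. apply join_absorb.
  - rewrite <- H. apply meet_absorb.
Qed.

Lemma join_l {L : ResLattice} (x y : L) : rle x (join x y).
Proof. apply meet_absorb. Qed.

Lemma join_r {L : ResLattice} (x y : L) : rle y (join x y).
Proof. rewrite joinC. apply meet_absorb. Qed.

Lemma join_lub {L : ResLattice} (x y z : L) : rle x z -> rle y z -> rle (join x y) z.
Proof.
  rewrite !le_join; intros H1 H2. rewrite <- joinA, H2, H1. reflexivity.
Qed.

Lemma le_top {L : ResLattice} (x : L) : rle x top.
Proof. unfold rle. rewrite meetC. apply meet_top. Qed.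

Lemma resid {L : ResLattice} (x y z : L) : rle z (imp x y) <-> rle (mul x z) y.
Proof. apply residuation. Qed.

Lemma mul_monol {L : ResLattice} (x y z : L) : rle x y -> rle (mul x z) (mul y z).
Proof. apply mul_mono. Qed.

Lemma mul_monor {L : ResLattice} (x y z : L) : rle x y -> rle (mul z x) (mul z y).
Proof. intro H. rewrite (mulC _ z x), (mulC _ z y). apply mul_mono. exact H. Qed.

Lemma mp {L : ResLattice} (y z : L) : rle (mul y (imp y z)) z.
Proof. apply resid. apply le_refl. Qed.

Lemma mul_join {L : ResLattice} (a b c : L) :
  mul a (join b c) = join (mul a b) (mul a c).
Proof.
  apply le_antisym.
  - apply resid. apply join_lub; apply resid; [apply join_l | apply join_r].
  - apply join_lub; apply mul_monor; [apply join_l | apply join_r].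
Qed.

Lemma imp_anti {L : ResLattice} (x y z : L) : rle x y -> rle (imp y z) (imp x z).
Proof.
  intro H. apply resid. eapply le_trans. apply mul_monol. exact H. apply mp.
Qed.

Lemma imp_mono {L : ResLattice} (x y z : L) : rle y z -> rle (imp x y) (imp x z).
Proof.
  intro H. apply resid. eapply le_trans. apply mp. exact H.
Qed.

Lemma imp_refl {L : ResLattice} (z : L) : imp z z = top.
Proof.
  apply le_antisym. apply le_top. apply resid. rewrite mul1. apply le_refl.
Qed.

Lemma mul_le_l {L : ResLattice} (x w : L) : rle (mul x w) x.
Proof.
  rewrite <- (mul1 L x) at 2. apply mul_monor. apply le_top.
Qed.

Theorem theorem3p5 (L : ResLattice) :
  is_BL L <->
  (forall x y z : L,
      imp (mul x (imp x y)) z = join (imp x z) (imp y z)).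
Proof.
  split.
  - intros [Hpre Hdiv] x y z. rewrite Hdiv.
    apply le_antisym.
    + set (w := imp (meet x y) z).
      rewrite <- (mul1 L w), <- (Hpre x y), mul_join.
      apply join_lub.
      * eapply le_trans; [| apply join_l]. apply resid.
        rewrite mulA, (mulC _ x w), <- mulA, Hdiv, mulC. apply mp.
      * eapply le_trans; [| apply join_r]. apply resid.
        rewrite mulA, (mulC _ y w), <- mulA, Hdiv, meetC, mulC. apply mp.
    + apply join_lub; apply imp_anti; [apply meet_l | apply meet_r].
  - intros H.
    assert (Hdiv : forall x y : L, mul x (imp x y) = meet x y).
    { intros x y. apply le_antisym.
      - apply meet_glb. apply mul_le_l. apply mp.
      - set (z := mul x (imp x y)).
        pose proof (H x y z) as E. rewrite imp_refl in E.
        rewrite <- (mul1 L (meet x y)), E, mul_join.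
        apply join_lub; apply resid.
        + eapply le_trans; [| apply imp_anti, meet_l]. apply le_refl.
        + eapply le_trans; [| apply imp_anti, meet_r]. apply le_refl. }
    split; [| exact Hdiv].
    intros x y. apply le_antisym. apply le_top.
    pose proof (H x y (meet x y)) as E. rewrite Hdiv, imp_refl in E.
    rewrite E. apply join_lub.
    + eapply le_trans; [| apply join_l]. apply imp_mono, meet_r.
    + eapply le_trans; [| apply join_r]. apply imp_mono, meet_l.
Qed.
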